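(* Let $\mathcal{L}$ be a nonempty set and $\mathcal{C}: 2^{\mathcal{L}}\to 2^{\mathcal{L}}$ a C-logics. A set $A\subseteq\mathcal{L}$ is inconsistent iff $\mathrm{Cn}(A)=\mathcal{L}$.
   Context: A C-logics is a map $\mathcal{C}: 2^{\mathcal{L}}\to 2^{\mathcal{L}}$ satisfying Inclusion ($A\subseteq\mathcal{C}(A)$) and Cumulativity ($A\subseteq B\subseteq\mathcal{C}(A)\Rightarrow\mathcal{C}(A)=\mathcal{C}(B)$) for all $A,B\subseteq\mathcal{L}$. $A$ is inconsistent iff $\mathcal{C}(A)=\mathcal{L}$. A theory is a set $T\subseteq\mathcal{L}$ with $\mathcal{C}(T)=T$. $\mathrm{Cn}(A)=\bigcap\{T : T\supseteq A,\ T \text{ a theory}\}$. *)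

(* Defs.v *)
From mathcomp Require Import all_boot.
From mathcomp Require Import classical_sets.
Set Implicit Arguments. Unset Strict Implicit. Unset Printing Implicit Defensive.
Local Open Scope classical_set_scope.

Definition C_logic (L : Type) (C : set L -> set L) : Prop :=
  (forall A : set L, A `<=` C A) /\
  (forall A B : set L, A `<=` B -> B `<=` C A -> C A = C B).

Definition inconsistent (L : Type) (C : set L -> set L) (A : set L) : Prop :=
  C A = setT.

Definition is_theory (L : Type) (C : set L -> set L) (T : set L) : Prop :=
  C T = T.

Definition Cn (L : Type) (C : set L -> set L) (A : set L) : set L :=
  \bigcap_(T in [set T : set L | A `<=` T /\ is_theory C T]) T.

(* Main.v *)
Require Import Defs.
From mathcomp Require Import all_boot.
From mathcomp Require Import classical_sets.
Local Open Scope classical_set_scope.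

Theorem lemma9 (L : Type) (HL : inhabited L) (C : set L -> set L)
  (HC : C_logic C) (A : set L) :
  inconsistent C A <-> Cn C A = setT.
Proof.
  destruct HC as [Inc Cum].
  assert (Hth : C (C A) = C A).
  { symmetry. apply Cum; [apply Inc | by []]. }
  unfold inconsistent, Cn; split.
  - move=> HA. apply/seteqP; split => // x _ T [AT thT].
    unfold is_theory in thT.
    have E : C A = C T by apply Cum => //; rewrite HA.
    by rewrite -thT -E HA.
  - move=> HCn. apply/seteqP; split => // x _.
    have : ([set: L] : set L) x by [].
    rewrite -HCn. apply. split; [apply Inc | exact Hth].
Qed.
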